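(* There is an absolute constant $C$ such that for every finite set $\mathcal{U}\subset\mathbb{R}$ there exists a family of finite automata (one per degree $d$), in which each node $i$ at each time step additionally reads its current input $u_i(t)\in\mathcal{U}$ and maintains variables $M_i(t)\in\mathcal{U}$ and $P_i(t)\in\{i\}\cup N(i)$, whose state at node $i$ can be stored in at most $C(\log|\mathcal{U}|+d(i))$ bits, with the following property. For every network and every collection of input sequences $(u_i(t))_{t\ge0}$, $u_i(t)\in\mathcal{U}$, for which there exists $T'$ with $u_i(t)=u_i(T')$ for all $i$ and all $t\ge T'$, there exists $T''$ such that for all $t\ge T''$: (i) $M_i(t)=\max_{j=1,\ldots,n}u_j(t)$ for every node $i$; and (ii) for every node $i$ there exist a node $j$ and an integer $K_0$ with $P_i^k(t)=j$ for all $k\ge K_0$, and $M_i(t)=u_j(t)$, where $P_i^1(t)=P_i(t)$ and $P_i^{k+1}(t)=P_{P_i^k(t)}(t)$.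
   Context: A network is a finite connected simple undirected graph $G=(V,E)$ with $V=\{1,\ldots,n\}$, together with a port labeling: for each node $i$ of degree $d(i)$, a bijection $\ell_i$ from the set $N(i)$ of neighbors of $i$ to $\{1,\ldots,d(i)\}$. Nodes run identical deterministic finite automata depending only on their degree, synchronously: at each round each node sends one message (from a finite message set) through each of its ports, and its next state depends only on its current state, its current input $u_i(t)$, and the messages received from each port (with neighbors distinguished only through local port numbers). Nodes have no global identifiers and no knowledge of $n$ or the graph; in particular the automata must work for every network and every port labeling. *)

(* Defs.v *)
From Stdlib Require Import Reals.
From mathcomp Require Import all_boot.
Set Implicit Arguments. Unset Strict Implicit. Unset Printing Implicit Defensive.

Definition deg (n : nat) (e : rel 'I_n) (i : 'I_n) : nat := #|[pred j | e i j]|.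

(* A port labeling is given through its inverse: nb i : 'I_(deg i) -> 'I_n,
   which must be a bijection onto N(i) (injective with values in N(i);
   since |N(i)| = deg i this is a bijection). *)
Definition is_network (n : nat) (e : rel 'I_n)
    (nb : forall i : 'I_n, 'I_(deg e i) -> 'I_n) : Prop :=
  [/\ 0 < n, symmetric e & irreflexive e] /\
  [/\ (forall i j, connect e i j),
      (forall i, injective (nb i)) &
      (forall i p, e i (nb i p))].

(* Variables M and P are functions of the state; outP = None means P = i itself,
   outP = Some p means P = the neighbor on port p. *)
Record automaton (Msg : finType) (d : nat) := Automaton {
  st : finType;
  init : st;
  send : st -> 'I_d -> Msg;
  trans : st -> R -> ('I_d -> Msg) -> st;
  outM : st -> R;
  outP : st -> option 'I_d }.

(* The message received by i on port p is what k = nb i p sent on its port q with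
   nb k q = i (such q exists in a network; m0 is an irrelevant default). *)
Fixpoint exec (n : nat) (e : rel 'I_n) (nb : forall i : 'I_n, 'I_(deg e i) -> 'I_n)
    (Msg : finType) (m0 : Msg) (A : forall d, automaton Msg d)
    (u : 'I_n -> nat -> R) (t : nat) : forall i : 'I_n, st (A (deg e i)) :=
  match t with
  | 0 => fun i => init (A (deg e i))
  | t'.+1 => fun i =>
      let x := exec nb m0 A u t' in
      trans (x i) (u i t')
        (fun p => let k := nb i p in
                  match [pick q | nb k q == i] with
                  | Some q => @send Msg _ (A (deg e k)) (x k) q
                  | None => m0
                  end)
  end.

Definition Mvar n (e : rel 'I_n) nb (Msg : finType) (m0 : Msg) A u t (i : 'I_n) : R :=
  outM (@exec n e nb Msg m0 A u t i).

Definition Pvar n (e : rel 'I_n) nb (Msg : finType) (m0 : Msg) A u t (i : 'I_n) : 'I_n :=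
  match outP (@exec n e nb Msg m0 A u t i) with
  | None => i
  | Some p => nb i p
  end.

Definition is_max n (v : 'I_n -> R) (M : R) : Prop :=
  (exists j, M = v j) /\ (forall j, Rle (v j) M).

(* Main.v *)
Require Import Defs.
From Stdlib Require Import Reals Lra Lia FunctionalExtensionality Classical.
From mathcomp Require Import all_boot.
Set Implicit Arguments. Unset Strict Implicit. Unset Printing Implicit Defensive.

Definition Rltb (x y : R) : bool := if Rlt_dec x y then true else false.
Definition Reqb (x y : R) : bool := if Req_EM_T x y then true else false.

Lemma RltbP (x y : R) : reflect (Rlt x y) (Rltb x y).
Proof. rewrite /Rltb; case: Rlt_dec => h; [by constructor | by constructor]. Qed.
Lemma ReqbP (x y : R) : reflect (x = y) (Reqb x y).
Proof. rewrite /Reqb; case: Req_EM_T => h; [by constructor | by constructor]. Qed.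

Section Aut.
Variable U : seq R.
Variable i0 : 'I_(size U).

Definition vo (a : 'I_(size U)) : R := nth R0 U a.
Definition idx (v : R) : 'I_(size U) := insubd i0 (find (Reqb v) U).

Lemma vo_idx v : List.In v U -> vo (idx v) = v.
Proof.
rewrite /vo /idx => hin.
have hh : has (Reqb v) U.
  elim: U hin => [|a s IH] //= [->|h]; first by case: ReqbP.
  by rewrite IH // orbT.
rewrite val_insubd -has_find hh.
by move: (nth_find R0 hh) => /ReqbP.
Qed.

Lemma In_nth (k : nat) : k < size U -> List.In (nth R0 U k) U.
Proof.
elim: U k => [|a s IH] [|k] //= h; first by left.
by right; apply: IH.
Qed.

Definition Msg := ('I_(size U) * bool * bool)%type.
Definition stT (d : nat) := ('I_(size U) * option 'I_d * 'I_((0 < d).+1))%type.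

Definition bad d (x : stT d) : bool := val x.2 != 0.
Definition badmark d : 'I_((0 < d).+1) := inord 1.

Definition tr d (x : stT d) (v : R) (msg : 'I_d -> Msg) : stT d :=
  let m := vo x.1.1 in
  let rst : stT d := (idx v, None, ord0) in
  let hasChild := [exists p, (msg p).2] in
  let normal :=
    match [pick p | ~~ (msg p).1.2 && Rltb (Rmax m v) (vo (msg p).1.1)] with
    | Some p => ((msg p).1.1, Some p, ord0)
    | None => if Rltb m v then rst else x
    end in
  if bad x then (if hasChild then x else rst)
  else match x.1.2 with
       | Some p => if (msg p).1.2 then (x.1, badmark d) else normal
       | None => if Rltb v m then (if 0 < d then (x.1, badmark d) else rst) else normal
       end.

Definition aut (d : nat) : automaton Msg d :=
  @Automaton Msg d (stT d) (i0, None, ord0)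
    (fun x p => (x.1.1, bad x, x.1.2 == Some p))
    (@tr d)
    (fun x => vo x.1.1)
    (fun x => x.1.2).

End Aut.

Lemma aux4 d : d.+2 * 2 <= 4 ^ d.+1.
Proof.
elim: d => [|d IH] //.
rewrite expnS (mulnC 4).
apply: leq_trans (leq_mul IH (leqnn 4)).
by apply/leP; rewrite -!multE; lia.
Qed.

Lemma card_bound (U : seq R) (i0 : 'I_(size U)) d :
  #|st (aut i0 d)| <= size U ^ 2 * 2 ^ (2 * d).
Proof.
rewrite /= !card_prod card_option !card_ord.
have hU : 0 < size U by case: (size U) i0 => [[]|].
have h1 : size U <= size U ^ 2 by rewrite expnS expn1 leq_pmulr.
rewrite -mulnA leq_mul // mulnC expnM.
case: d => [|d] //=.
by rewrite mulnC; exact: aux4.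
Qed.

Section Net.
Local Unset Implicit Arguments.
Variables (U : seq R) (i0 : 'I_(size U)).
Variables (n : nat) (e : rel 'I_n) (nb : forall i : 'I_n, 'I_(deg e i) -> 'I_n).
Hypothesis Hnet : is_network nb.
Variables (m0 : Msg U) (u : 'I_n -> nat -> R).
Hypothesis Hu : forall i t, List.In (u i t) U.

Definition X t i : stT U (deg e i) := exec nb m0 (aut i0) u t i.
Definition Mt t i : R := vo (X t i).1.1.
Definition Bt t i : bool := bad (X t i).
Definition Pt t i : 'I_n := match (X t i).1.2 with None => i | Some p => nb i p end.
Definition ch t i : bool := [exists j, (j != i) && (Pt t j == i)].

Arguments X : simpl never.
Arguments Mt : simpl never.
Arguments Pt : simpl never.
Arguments Bt : simpl never.
Arguments ch : simpl never.

Lemma e_sym i j : e i j -> e j i.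
Proof. by case: Hnet => [[_ hs _] _]; rewrite hs. Qed.
Lemma eirr i : e i i = false.
Proof. by case: Hnet => [[_ _ hi] _]; rewrite hi. Qed.
Lemma nb_e i p : e i (nb i p).
Proof. by case: Hnet => [_ [_ _ h]]. Qed.
Lemma nb_inj i : injective (nb i).
Proof. by case: Hnet => [_ [_ h _]]. Qed.
Lemma nb_neq i p : (nb i p == i) = false.
Proof. apply/eqP => h; have := nb_e i p; by rewrite h eirr. Qed.

Lemma nb_onto i j : e i j -> exists p, nb i p = j.
Proof.
move=> hij.
have hsub : image (nb i) 'I_(deg e i) \subset [pred j | e i j].
  by apply/subsetP => x /imageP [p _ ->]; rewrite inE nb_e.
have := subset_leqif_card hsub.
rewrite card_image; last exact: nb_inj.
rewrite card_ord /deg => -[_]; rewrite eqxx => /esym /subsetP hs.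
by case/imageP: (hs j hij) => p _ ->; exists p.
Qed.

Lemma step t i : X t.+1 i =
  @tr U i0 _ (X t i) (u i t) (fun p => ((X t (nb i p)).1.1, Bt t (nb i p), Pt t (nb i p) == i)).
Proof.
rewrite /X /=; congr tr; apply: functional_extensionality => p.
set k := nb i p.
have [q0 hq0] := nb_onto _ _ (e_sym _ _ (nb_e i p)).
case: pickP => [q /eqP hq | hn]; last by have := hn q0; rewrite hq0 eqxx.
rewrite /= /Bt /Pt /X /=; congr (_, _).
case: (exec nb m0 (aut i0) u t k).1.2 => [q'|] /=.
  by rewrite -hq (inj_eq (nb_inj k)).
by apply/esym/eqP => hk; have := nb_e i p; rewrite -/k hk eirr.
Qed.


Lemma Pt_some t i : Pt t i != i -> exists p, (X t i).1.2 = Some p /\ nb i p = Pt t i.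
Proof. rewrite /Pt; case: (X t i).1.2 => [p|]; last by rewrite eqxx. by exists p. Qed.

Lemma Pt_e t i : Pt t i != i -> e i (Pt t i).
Proof. by case/Pt_some => p [_ <-]; apply: nb_e. Qed.

Lemma chE t i : [exists p, Pt t (nb i p) == i] = ch t i.
Proof.
apply/existsP/existsP => [[p hp] | [j /andP [hj hp]]].
  by exists (nb i p); rewrite hp nb_neq.
have hj' : Pt t j != j by rewrite (eqP hp) eq_sym.
have := Pt_e t j hj'; rewrite (eqP hp) => /e_sym /nb_onto [p hp'].
by exists p; rewrite hp'.
Qed.

Lemma vo_In (a : 'I_(size U)) : List.In (vo a) U.
Proof. exact: In_nth. Qed.

Lemma Mt_In t i : List.In (Mt t i) U.
Proof. exact: vo_In. Qed.

Lemma badmarkE d : 0 < d -> val (badmark d) = 1.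
Proof. by move=> hd; rewrite /badmark /= inordK // hd. Qed.

Inductive step_spec t i : Prop :=
| SBadKeep of Bt t i & ch t i & X t.+1 i = X t i
| SBadReset of Bt t i & ~~ ch t i & Mt t.+1 i = u i t & Pt t.+1 i = i & ~~ Bt t.+1 i
| SMarkP of ~~ Bt t i & Pt t i != i & Bt t (Pt t i) &
    Mt t.+1 i = Mt t i & Pt t.+1 i = Pt t i & Bt t.+1 i
| SMarkR of ~~ Bt t i & Pt t i = i & Rlt (u i t) (Mt t i) & 0 < deg e i &
    Mt t.+1 i = Mt t i & Pt t.+1 i = i & Bt t.+1 i
| SResetR of ~~ Bt t i & Pt t i = i & Rlt (u i t) (Mt t i) & deg e i = 0 &
    Mt t.+1 i = u i t & Pt t.+1 i = i & ~~ Bt t.+1 i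
| SAdopt k of ~~ Bt t i & e i k & ~~ Bt t k & Rlt (Rmax (Mt t i) (u i t)) (Mt t k) &
    Mt t.+1 i = Mt t k & Pt t.+1 i = k & ~~ Bt t.+1 i
| SResetN of ~~ Bt t i & ~~ ((Pt t i != i) && Bt t (Pt t i)) &
    ~~ ((Pt t i == i) && Rltb (u i t) (Mt t i)) &
    (forall k, e i k -> ~~ Bt t k -> Rle (Mt t k) (Rmax (Mt t i) (u i t))) &
    Rlt (Mt t i) (u i t) & Mt t.+1 i = u i t & Pt t.+1 i = i & ~~ Bt t.+1 i
| SKeep of ~~ Bt t i & ~~ ((Pt t i != i) && Bt t (Pt t i)) &
    ~~ ((Pt t i == i) && Rltb (u i t) (Mt t i)) &
    (forall k, e i k -> ~~ Bt t k -> Rle (Mt t k) (Rmax (Mt t i) (u i t))) &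
    ~ Rlt (Mt t i) (u i t) & X t.+1 i = X t i.


Lemma noadoptP t i :
  (forall p : 'I_(deg e i), ~~ (~~ Bt t (nb i p) && Rltb (Rmax (Mt t i) (u i t)) (Mt t (nb i p)))) ->
  forall k, e i k -> ~~ Bt t k -> Rle (Mt t k) (Rmax (Mt t i) (u i t)).
Proof.
move=> hn k /(nb_onto _ _) [p <-] hb.
have := hn p; rewrite hb /=; case: RltbP => // h _.
by apply: Rnot_lt_le.
Qed.

Lemma stepP t i : step_spec t i.
Proof.
have hs := step t i.
have hch := chE t i.
move: hs; rewrite /tr /=.
case hb: (bad (X t i)) => hs.
  case hc: [exists p, Pt t (nb i p) == i] hs => hs.
    by apply: SBadKeep; rewrite /Bt ?hb -?hch.
  apply: SBadReset; rewrite /Bt /Mt /Pt ?hs ?hb -?hch ?hc //=.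
  exact: vo_idx.
have hb' : ~~ Bt t i by rewrite /Bt hb.
case hP: (X t i).1.2 hs => [p|] hs.
  have hPt : Pt t i = nb i p by rewrite /Pt hP.
  have hd : 0 < deg e i := leq_ltn_trans (leq0n p) (ltn_ord p).
  case hbp: (Bt t (nb i p)) hs => hs.
    apply: SMarkP; rewrite // ?hPt ?nb_neq ?hbp //.
    - by rewrite /Mt hs.
    - by rewrite /Pt hs hP.
    - by rewrite /Bt /bad hs /= badmarkE.
  have hn1 : ~~ ((Pt t i != i) && Bt t (Pt t i)) by rewrite hPt hbp andbF.
  have hn2 : ~~ ((Pt t i == i) && Rltb (u i t) (Mt t i)) by rewrite hPt nb_neq.
  case: pickP hs => [q /andP [hq1 hq2] | hn] hs;
  [ apply: (@SAdopt t i (nb i q)); rewrite // ?nb_e //;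
      [ by apply/RltbP | by rewrite /Mt hs | by rewrite /Pt hs | by rewrite /Bt hs ]
  | case hr: (Rltb (vo (X t i).1.1) (u i t)) hs => hs;
      [ apply: SResetN; rewrite ?hb' ?hn1 ?hn2 //;
         [ by apply: noadoptP => p0; apply/negP => hp; have := hn p0; rewrite hp
         | by apply/RltbP
         | by rewrite /Mt hs vo_idx
         | by rewrite /Pt hs
         | by rewrite /Bt hs ]
      | apply: SKeep; rewrite ?hb' ?hn1 ?hn2 //;
         [ by apply: noadoptP => p0; apply/negP => hp; have := hn p0; rewrite hp
         | by move/RltbP; rewrite /Mt hr ] ] ].
have hPt : Pt t i = i by rewrite /Pt hP.
case hr0: (Rltb (u i t) (vo (X t i).1.1)) hs => hs.
  move: hs; case: ifP => hd hs.
    apply: SMarkR; rewrite // ?hd //.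
    - by apply/RltbP.
    - by rewrite /Mt hs.
    - by rewrite /Pt hs hP.
    - by rewrite /Bt /bad hs /= badmarkE.
  apply: SResetR => //.
  - by apply/RltbP.
  - by move: hd; case: (deg e i).
  - by rewrite /Mt hs vo_idx.
  - by rewrite /Pt hs.
  - by rewrite /Bt hs.
have hn1 : ~~ ((Pt t i != i) && Bt t (Pt t i)) by rewrite hPt eqxx.
have hn2 : ~~ ((Pt t i == i) && Rltb (u i t) (Mt t i)) by rewrite /Mt hr0 andbF.
case: pickP hs => [q /andP [hq1 hq2] | hn] hs;
  [ apply: (@SAdopt t i (nb i q)); rewrite // ?nb_e //;
      [ by apply/RltbP | by rewrite /Mt hs | by rewrite /Pt hs | by rewrite /Bt hs ]
  | case hr: (Rltb (vo (X t i).1.1) (u i t)) hs => hs;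
      [ apply: SResetN; rewrite ?hb' ?hn1 ?hn2 //;
         [ by apply: noadoptP => p0; apply/negP => hp; have := hn p0; rewrite hp
         | by apply/RltbP
         | by rewrite /Mt hs vo_idx
         | by rewrite /Pt hs
         | by rewrite /Bt hs ]
      | apply: SKeep; rewrite ?hb' ?hn1 ?hn2 //;
         [ by apply: noadoptP => p0; apply/negP => hp; have := hn p0; rewrite hp
         | by move/RltbP; rewrite /Mt hr ] ] ].
Qed.


Lemma X_eq t i : X t.+1 i = X t i ->
  [/\ Mt t.+1 i = Mt t i, Pt t.+1 i = Pt t i & Bt t.+1 i = Bt t i].
Proof. by move=> h; rewrite /Mt /Pt /Bt h. Qed.

Lemma e_deg i j : e i j -> 0 < deg e i.
Proof. by move=> h; apply/card_gt0P; exists j. Qed.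

Lemma chP t k : reflect (exists j, j != k /\ Pt t j = k) (ch t k).
Proof.
apply: (iffP existsP) => [[j /andP [h1 /eqP h2]] | [j [h1 h2]]]; exists j => //.
by rewrite h1 h2 eqxx.
Qed.

Lemma ch_deg t k : ch t k -> 0 < deg e k.
Proof.
case/chP => j [hj hP]; have hj' : Pt t j != j by rewrite hP eq_sym.
by apply: (e_deg k j); apply: e_sym; rewrite -hP; apply: Pt_e.
Qed.

Lemma mono t k : ch t k \/ (~~ Bt t k /\ 0 < deg e k) -> Rle (Mt t k) (Mt t.+1 k).
Proof.
move=> H; case: (stepP t k).
- by move=> _ _ /X_eq [-> _ _]; apply: Rle_refl.
- move=> hb hc; case: H => [hch | [hnb _]]; [by rewrite hch in hc | by rewrite hb in hnb].
- by move=> _ _ _ -> _ _; apply: Rle_refl.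
- by move=> _ _ _ _ -> _ _; apply: Rle_refl.
- move=> _ _ _ hd; case: H => [/ch_deg | [_]]; by rewrite hd.
- move=> k' _ _ _ hlt -> _ _; apply: Rlt_le; apply: Rle_lt_trans hlt; apply: Rmax_l.
- by move=> _ _ _ _ hlt -> _ _; apply: Rlt_le.
- by move=> _ _ _ _ _ /X_eq [-> _ _]; apply: Rle_refl.
Qed.

Lemma chPt t i : Pt t i != i -> ch t (Pt t i).
Proof. by move=> h; apply/chP; exists i; split => //; rewrite eq_sym. Qed.

Lemma badkeep t k : Bt t k -> ch t k -> X t.+1 k = X t k.
Proof.
move=> hb hc; case: (stepP t k) => //; try by rewrite hb.
by rewrite hc.
Qed.

Definition Inv t :=
  [/\ (forall i, Pt t i != i -> Rle (Mt t i) (Mt t (Pt t i))),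
      (forall i, Pt t i != i -> Bt t i -> Bt t (Pt t i)) &
      (forall i, Pt t i != i -> ~~ fconnect (Pt t) (Pt t i) i)].

Lemma Inv0 : Inv 0.
Proof. by split => i; rewrite /Pt /X /= eqxx. Qed.


Lemma I1_step t : Inv t -> forall i, Pt t.+1 i != i -> Rle (Mt t.+1 i) (Mt t.+1 (Pt t.+1 i)).
Proof.
case=> I1 I2 I3 i; case: (stepP t i).
- move=> _ _ /X_eq [-> -> _] hP; have := I1 i hP.
  have := mono t (Pt t i) (or_introl (chPt t i hP)); lra.
- by move=> _ _ _ ->; rewrite eqxx.
- move=> _ hP _ -> -> _ _; have := I1 i hP.
  have := mono t (Pt t i) (or_introl (chPt t i hP)); lra.
- by move=> _ _ _ _ _ ->; rewrite eqxx.
- by move=> _ _ _ _ _ ->; rewrite eqxx.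
- move=> k _ hik hbk _ -> -> _ _; apply: mono; right; split => //.
  by apply: (e_deg k i); apply: e_sym.
- by move=> _ _ _ _ _ _ ->; rewrite eqxx.
- move=> _ _ _ _ _ /X_eq [-> -> _] hP; have := I1 i hP.
  have := mono t (Pt t i) (or_introl (chPt t i hP)); lra.
Qed.

Lemma I2_step t : Inv t -> forall i, Pt t.+1 i != i -> Bt t.+1 i -> Bt t.+1 (Pt t.+1 i).
Proof.
case=> I1 I2 I3 i; case: (stepP t i).
- move=> hb _ /X_eq [_ -> _] hP _.
  have hc := chPt t i hP; have hb' := I2 i hP hb.
  by case/X_eq: (badkeep t _ hb' hc) => _ _ ->.
- by move=> _ _ _ ->; rewrite eqxx.
- move=> _ hP hb' _ -> _ _ _; have hc := chPt t i hP.
  by case/X_eq: (badkeep t _ hb' hc) => _ _ ->.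
- by move=> _ _ _ _ _ ->; rewrite eqxx.
- by move=> _ _ _ _ _ ->; rewrite eqxx.
- by move=> k _ _ _ _ _ _ /negP.
- by move=> _ _ _ _ _ _ ->; rewrite eqxx.
- by move=> hb _ _ _ _ /X_eq [_ _ ->]; rewrite (negbTE hb).
Qed.

Lemma edge t : Inv t -> forall c, Pt t.+1 c != c ->
  Pt t.+1 c = Pt t c \/ Rlt (Mt t c) (Mt t (Pt t.+1 c)).
Proof.
move=> _ c; case: (stepP t c).
- by move=> _ _ /X_eq [_ -> _]; left.
- by move=> _ _ _ ->; rewrite eqxx.
- by move=> _ _ _ _ -> _; left.
- by move=> _ _ _ _ _ ->; rewrite eqxx.
- by move=> _ _ _ _ _ ->; rewrite eqxx.
- move=> k _ _ _ hlt _ -> _ _; right; apply: Rle_lt_trans hlt; apply: Rmax_l.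
- by move=> _ _ _ _ _ _ ->; rewrite eqxx.
- by move=> _ _ _ _ _ /X_eq [_ -> _]; left.
Qed.

Lemma edge_mono t : Inv t -> forall c, Rle (Mt t c) (Mt t (Pt t.+1 c)).
Proof.
move=> hI c; case: (eqVneq (Pt t.+1 c) c) => [-> | h]; first exact: Rle_refl.
case: (edge t hI c h) => [e1 | hlt]; last exact: Rlt_le.
case: hI => I1 _ _; rewrite e1; apply: I1; by rewrite -e1.
Qed.

Lemma path_mono t : Inv t -> forall a x, Rle (Mt t x) (Mt t (iter a (Pt t.+1) x)).
Proof.
move=> hI; elim=> [|a IH] x /=; first exact: Rle_refl.
have := IH x; have := edge_mono t hI (iter a (Pt t.+1) x); lra.
Qed.

Lemma I3_step t : Inv t -> forall i, Pt t.+1 i != i -> ~~ fconnect (Pt t.+1) (Pt t.+1 i) i.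
Proof.
move=> hI i hi; apply/negP => hc.
move/iter_findex: hc; set K := findex _ _ _ => hK.
have hK1 : iter K.+1 (Pt t.+1) i = i by rewrite iterSr.
have key : forall a, a <= K -> Pt t.+1 (iter a (Pt t.+1) i) = Pt t (iter a (Pt t.+1) i).
  move=> a ha; set c := iter a (Pt t.+1) i.
  have hci : iter (K.+1 - a) (Pt t.+1) c = i by rewrite /c -iterD subnK // leqW.
  have hc : Pt t.+1 c != c.
    apply/eqP => hcc.
    have hfix : forall m, iter m (Pt t.+1) c = c by elim=> //= m ->.
    by move: hi; rewrite -hci hfix hcc eqxx.
  case: (edge t hI c hc) => [e1|hlt]; first exact: e1.
  have h1 := path_mono t hI (K - a) (Pt t.+1 c).
  have h2 := path_mono t hI a i.
  rewrite -iterSr -subSn // hci in h1; rewrite -/c in h2.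
  exfalso; lra.
have heq : forall a, a <= K.+1 -> iter a (Pt t) i = iter a (Pt t.+1) i.
  elim=> [_|a IH ha]; first by [].
  rewrite !iterS IH; [exact: esym (key a ha) | exact: ltnW].
have hP : Pt t i = Pt t.+1 i := esym (key 0 (leq0n K)).
have hK2 : iter K.+1 (Pt t) i = i.
  rewrite heq; [exact: hK1 | exact: leqnn].
case: hI => _ _ I3.
have := I3 i; rewrite hP => /(_ hi) /negP; apply.
rewrite -hP; have := fconnect_iter (Pt t) K (Pt t i).
by rewrite -iterSr hK2.
Qed.

Lemma Inv_step t : Inv t -> Inv t.+1.
Proof.
move=> hI; split; [exact: I1_step | exact: I2_step | exact: I3_step].
Qed.

Lemma Inv_all t : Inv t.
Proof. elim: t => [|t IH]; [exact: Inv0 | exact: Inv_step]. Qed.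


Lemma root_le t i : ~~ Bt t.+1 i -> Pt t.+1 i = i -> Rle (Mt t.+1 i) (u i t).
Proof.
case: (stepP t i).
- by move=> hb _ /X_eq [_ _ ->]; rewrite hb.
- by move=> _ _ -> _ _ _ _; apply: Rle_refl.
- by move=> _ _ _ _ _ ->.
- by move=> _ _ _ _ _ _ ->.
- by move=> _ _ _ _ -> _ _ _ _; apply: Rle_refl.
- move=> k _ hik _ _ _ -> _ _ hk; move: hik; by rewrite hk eirr.
- by move=> _ _ _ _ _ -> _ _ _ _; apply: Rle_refl.
- move=> _ _ h2 _ _ /X_eq [-> -> _] _ hP.
  apply: Rnot_lt_le => hlt; move: h2; rewrite hP eqxx /=.
  by case: RltbP.
Qed.

Lemma nb_child s j : ~~ Bt s.+1 j -> Pt s.+1 j != j -> ~~ Bt s j /\ ~~ Bt s (Pt s.+1 j).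
Proof.
case: (stepP s j).
- by move=> hb _ /X_eq [_ _ ->]; rewrite hb.
- by move=> _ _ _ ->; rewrite eqxx.
- by move=> _ _ _ _ _ ->.
- by move=> _ _ _ _ _ _ ->.
- by move=> _ _ _ _ _ ->; rewrite eqxx.
- by move=> k hb _ hbk _ _ -> _ _ _.
- by move=> _ _ _ _ _ _ ->; rewrite eqxx.
- move=> hb h1 _ _ _ /X_eq [_ -> _] _ hP; split => //.
  by move: h1; rewrite hP /=.
Qed.

Lemma fix_conn t x y : Pt t x = x -> fconnect (Pt t) x y -> y = x.
Proof.
move=> hx /iter_findex <-; elim: (findex _ _ _) => [|m IH] //.
by rewrite iterS IH.
Qed.

Lemma fconnect_step t x y : fconnect (Pt t) x y -> y != x -> fconnect (Pt t) (Pt t x) y.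
Proof.
move=> /iter_findex; case: (findex _ _ _) => [<-|m <-]; first by rewrite eqxx.
by rewrite iterSr fconnect_iter.
Qed.

Definition Anc t x := [pred y | fconnect (Pt t) x y].
Definition BadAnc t x := [pred y | fconnect (Pt t) x y && Bt t y].

Lemma anc_lt t x : Pt t x != x -> #|Anc t (Pt t x)| < #|Anc t x|.
Proof.
move=> hx; apply: proper_card; apply/properP; split.
  apply/subsetP => y; rewrite !inE => h.
  exact: connect_trans (fconnect1 _ x) h.
exists x; rewrite !inE ?connect0 //.
by case: (Inv_all t) => _ _ I3; apply: I3.
Qed.


Section Live.
Local Set Implicit Arguments.
Variable T' : nat.
Hypothesis hT : forall i t, T' <= t -> u i t = u i T'.

Lemma root_le2 t i : T'.+1 <= t -> ~~ Bt t i -> Pt t i = i -> Rle (Mt t i) (u i t).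
Proof.
case: t => [//|t] ht hb hP.
rewrite (hT i (ltnW ht)) -(hT i ht).
exact: root_le.
Qed.

Lemma becomes_bad s k : T'.+1 <= s -> ~~ Bt s k -> Bt s.+1 k ->
  [/\ Pt s k != k, Bt s (Pt s k) & Pt s.+1 k = Pt s k].
Proof.
move=> hs hb; case: (stepP s k).
- by move=> hb'; rewrite hb' in hb.
- by move=> hb'; rewrite hb' in hb.
- by move=> _ h1 h2 _ h3 _.
- move=> _ hP hlt _ _ _ _ _; have := root_le2 hs hb hP; lra.
- by move=> _ _ _ _ _ _ /negP.
- by move=> k' _ _ _ _ _ _ /negP.
- by move=> _ _ _ _ _ _ _ /negP.
- by move=> _ _ _ _ _ /X_eq [_ _ ->] hb'; rewrite hb' in hb.
Qed.

Lemma chain s k : Bt s k -> ch s k -> forall a,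
  [/\ Bt s (iter a (Pt s) k), ch s (iter a (Pt s) k) & iter a (Pt s.+1) k = iter a (Pt s) k].
Proof.
move=> hb hc; elim=> [|a [h1 h2 h3]]; first by split.
have [_ hP hB] := X_eq _ _ (badkeep _ _ h1 h2).
rewrite !iterS h3 hP; case: (eqVneq (Pt s (iter a (Pt s) k)) (iter a (Pt s) k)) => [-> | hne].
  by split.
split => //; last exact: chPt.
by case: (Inv_all s) => _ I2 _; apply: I2.
Qed.

Lemma tainted d : forall j, ~~ Bt (T'.+1 + d) j ->
  (exists y, fconnect (Pt (T'.+1 + d)) j y && Bt (T'.+1 + d) y) ->
  d <= #|BadAnc (T'.+1 + d) j|.
Proof.
elim: d => [|d IHd]; first by move=> *; exact: leq0n.
rewrite addnS; set s := T'.+1 + d.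
have hs : T'.+1 <= s := leq_addr d _.
suff H : forall N j, #|Anc s.+1 j| <= N -> ~~ Bt s.+1 j ->
    (exists y, fconnect (Pt s.+1) j y && Bt s.+1 y) -> d.+1 <= #|BadAnc s.+1 j|.
  by move=> j; apply: H (leqnn _).
elim=> [|N IHN] j hN hbj [y /andP [hjy hby]].
  move: hN; rewrite leqn0 => /eqP/card0_eq/(_ j).
  by rewrite !inE connect0.
have hyj : y != j by apply/eqP => h; move: hbj; rewrite -h hby.
have hPj : Pt s.+1 j != j.
  by apply/eqP => h; move: hyj; rewrite (fix_conn _ _ _ h hjy) eqxx.
set k := Pt s.+1 j.
have [hbsj hbsk] := nb_child _ _ hbj hPj.
have hjk : fconnect (Pt s.+1) j k := fconnect1 _ j.
have hcard : #|BadAnc s.+1 k| <= #|BadAnc s.+1 j|.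
  apply: subset_leq_card; apply/subsetP => z; rewrite !inE => /andP [h1 h2].
  by rewrite h2 (connect_trans hjk h1).
apply: leq_trans hcard.
case hbk : (Bt s.+1 k).
  have [hPk hbp hPk'] := becomes_bad hs hbsk hbk.
  set p := Pt s k in hbp hPk'.
  have IH := IHd k hbsk (ex_intro _ p (introT andP (conj (fconnect1 _ k) hbp))).
  apply: leq_ltn_trans IH _; apply: proper_card; apply/properP; split.
    apply/subsetP => z; rewrite !inE => /andP [h1 h2].
    have hzk : z != k by apply/eqP => h; move: hbsk; rewrite -/k -h h2.
    have hpz := fconnect_step _ _ _ h1 hzk.
    rewrite -/p in hpz; move/iter_findex: hpz; set a := findex _ _ _ => hz.
    have [ha1 ha2 ha3] := chain hbp (chPt _ _ hPk) a.
    rewrite hz in ha1 ha2 ha3.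
    have [_ _ ->] := X_eq _ _ (badkeep _ _ ha1 ha2).
    rewrite ha1 andbT; apply: connect_trans (fconnect1 _ k) _.
    by rewrite hPk' -ha3 fconnect_iter.
  by exists k; rewrite !inE ?connect0 ?hbk // (negbTE hbsk) andbF.
apply: IHN => //.
  by rewrite -ltnS; apply: leq_trans (anc_lt _ _ hPj) hN.
  by rewrite hbk.
by exists y; rewrite hby andbT; exact: (fconnect_step _ _ _ hjy hyj).
Qed.

Lemma no_tainted s : T'.+1 + n <= s -> forall j y, ~~ Bt s j -> fconnect (Pt s) j y -> ~~ Bt s y.
Proof.
move=> hs j y hbj hjy; apply/negP => hby.
have hs1 : T'.+1 <= s by apply: leq_trans hs; apply: leq_addr.
have := @tainted (s - T'.+1) j; rewrite subnKC // => /(_ hbj).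
have hex : exists y, fconnect (Pt s) j y && Bt s y by exists y; rewrite hjy hby.
move=> /(_ hex) h1.
have h2 : #|BadAnc s j| < #|'I_n|.
  apply: proper_card; apply/properP; split.
    by apply/subsetP.
  by exists j => //; rewrite !inE (negbTE hbj) andbF.
rewrite card_ord in h2.
have : n <= s - T'.+1 by rewrite leq_subRL // addnC.
move=> h3; have := leq_ltn_trans h3 (leq_ltn_trans h1 h2).
by rewrite ltnn.
Qed.

Lemma stay_good s x : T'.+1 + n <= s -> ~~ Bt s x -> ~~ Bt s.+1 x.
Proof.
move=> hs hb; apply/negP => hb'.
have hs1 : T'.+1 <= s by apply: leq_trans hs; apply: leq_addr.
have [hP hbp _] := becomes_bad hs1 hb hb'.
by have := no_tainted hs hb (fconnect1 _ x); rewrite hbp.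
Qed.

Lemma leaf s : T'.+1 + n <= s -> forall x, Bt s x -> exists z, Bt s z && ~~ ch s z.
Proof.
move=> hs x hx.
case: (arg_maxnP (fun z => #|Anc s z|) hx) => z hz hmax.
exists z; rewrite hz /=; apply/negP => /chP [c [hc hPc]].
have hbc : Bt s c.
  case hbc0: (Bt s c) => //.
  by have := no_tainted hs (negbT hbc0) (fconnect1 _ c); rewrite hPc hz.
have := hmax c hbc; rewrite /geq.
have hPc' : Pt s c != c by rewrite hPc eq_sym.
by have := anc_lt _ _ hPc'; rewrite hPc => h1 h2; move: (leq_ltn_trans h2 h1); rewrite ltnn.
Qed.

Lemma bad_dec s : T'.+1 + n <= s -> (exists x, Bt s x) ->
  #|[pred x | Bt s.+1 x]| < #|[pred x | Bt s x]|.
Proof.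
move=> hs [x hx]; have [z /andP [hbz hcz]] := leaf hs hx.
apply: proper_card; apply/properP; split.
  apply/subsetP => y; rewrite !inE => hy; case hy0: (Bt s y) => //.
  by have := stay_good hs (negbT hy0); rewrite hy.
exists z; rewrite !inE //.
by case: (stepP s z) => //; rewrite ?hbz ?(negbTE hcz).
Qed.

Lemma no_bad s : T'.+1 + n + n <= s -> forall x, ~~ Bt s x.
Proof.
set T1 := T'.+1 + n.
have H : forall d, #|[pred x | Bt (T1 + d) x]| <= n - d.
  elim=> [|d IH]; first by rewrite addn0 subn0; have := max_card [pred x | Bt T1 x]; rewrite card_ord.
  rewrite addnS subnS.
  have hs : T'.+1 + n <= T1 + d by apply: leq_addr.
  case: (boolP [exists x, Bt (T1 + d) x]) => [/existsP hex | hno].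
    by rewrite -ltnS (leq_trans (bad_dec hs hex)) // (leq_trans IH) // leqSpred.
  suff -> : #|[pred x | Bt (T1 + d).+1 x]| = 0 by [].
  apply: eq_card0 => x; rewrite !inE; apply: negbTE; refine (@stay_good (T1 + d) x hs _).
  by apply/negP => hb; move/negP: hno; apply; apply/existsP; exists x.
move=> hs x; apply/negP => hb.
have hT1 : T1 <= s := leq_trans (leq_addr n T1) hs.
have := H (s - T1); rewrite (subnKC hT1).
have -> : n - (s - T1) = 0.
  by apply/eqP; rewrite subn_eq0 (leq_subRL _ hT1).
rewrite leqn0 => /eqP/card0_eq/(_ x); by rewrite !inE hb.
Qed.

Definition cntl (l : seq R) x := count (fun y => Rltb y x) l.

Lemma cntl_mono l x x' : Rle x x' -> cntl l x <= cntl l x'.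
Proof.
move=> h; elim: l => [|a l IH] //=; apply: leq_add => //.
case: RltbP => //= h1; case: RltbP => //= h2; exfalso; lra.
Qed.

Lemma cntl_lt l x x' : List.In x l -> Rlt x x' -> cntl l x < cntl l x'.
Proof.
move=> hin h; elim: l hin => [|a l IH] //= [->|hin].
  have e1 : Rltb x x = false by case: RltbP => // h1; exfalso; lra.
  have e2 : Rltb x x' = true by case: RltbP.
  rewrite /cntl /= e1 e2 add0n add1n ltnS.
  exact: cntl_mono (Rlt_le _ _ h).
rewrite /cntl /= -/(cntl l x) -/(cntl l x').
rewrite -addnS; apply: leq_add; last exact: IH hin.
case: RltbP => //= h1; case: RltbP => //= h2; exfalso; lra.
Qed.

Lemma ev_mono (f : nat -> nat) B : (forall k, f k <= f k.+1) -> (forall k, f k <= B) ->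
  exists S, forall k, S <= k -> f k = f S.
Proof.
move=> hm hb.
suff H : forall m g, (forall k, g k <= g k.+1) -> (forall k, g k <= B) -> B - g 0 <= m ->
    exists S, forall k, S <= k -> g k = g S by exact: H (B - f 0) f hm hb (leqnn _).
elim=> [|m IH] g hgm hgb hg;
  have homo := homo_leq (r := leq) leqnn (fun y x z => @leq_trans y x z) hgm;
  (case: (classic (exists k, g k <> g 0)) => [[k hk] | hno];
    last by exists 0 => k _; apply: NNPP => h; apply: hno; exists k).
- have h1 : g 0 < g k by rewrite ltn_neqAle (homo 0 k) // andbT eq_sym; apply/eqP.
  have := hgb k; move: hg; rewrite leqn0 subn_eq0 => h2 h3.
  by have := leq_trans h3 h2; rewrite leqNgt h1.
- have h1 : g 0 < g k by rewrite ltn_neqAle (homo 0 k) // andbT eq_sym; apply/eqP.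
  have hm' : forall j, g (k + j) <= g (k + j.+1) by move=> j; rewrite addnS.
  have hlt : B - g (k + 0) <= m.
    rewrite addn0 -ltnS; apply: leq_trans hg.
    apply: ltn_sub2l => //; exact: leq_trans h1 (hgb k).
  have [S hS] := IH (fun j => g (k + j)) hm' (fun j => hgb _) hlt.
  exists (k + S) => j hj; rewrite -(subnKC (leq_trans (leq_addr S k) hj)).
  by apply: hS; rewrite -(leq_add2l k) subnKC // (leq_trans (leq_addr S k) hj).
Qed.

Lemma phC s : T'.+1 + n + n <= s -> forall i,
  (X s.+1 i = X s i /\ (forall k, e i k -> Rle (Mt s k) (Rmax (Mt s i) (u i s))) /\ ~ Rlt (Mt s i) (u i s)) \/ Rlt (Mt s i) (Mt s.+1 i).
Proof.
move=> hs i; have hnb := no_bad hs.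
have hs1 : T'.+1 <= s by apply: leq_trans hs; rewrite -addnA leq_addr.
case: (stepP s i).
- by move=> hb; have := hnb i; rewrite hb.
- by move=> hb; have := hnb i; rewrite hb.
- by move=> _ _ hbp; have := hnb (Pt s i); rewrite hbp.
- move=> hb hP hlt _ _ _ _; have h := root_le2 hs1 hb hP; exfalso; lra.
- move=> hb hP hlt _ _ _ _; have h := root_le2 hs1 hb hP; exfalso; lra.
- move=> k _ _ _ hlt -> _ _; right; apply: Rle_lt_trans hlt; apply: Rmax_l.
- by move=> _ _ _ _ hlt -> _ _; right.
- move=> _ _ _ hno hnl hX; left; split; first exact: hX.
  split; last exact: hnl.
  by move=> k hk; apply: hno hk (hnb k).
Qed.

Lemma ev_const i : exists S, forall s, S <= s -> Mt s.+1 i = Mt s i.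
Proof.
set T2 := T'.+1 + n + n.
have hm : forall k, cntl U (Mt (T2 + k) i) <= cntl U (Mt (T2 + k).+1 i).
  move=> k; case: (phC (leq_addr k T2) i) => [[hX _] | hlt].
    by case: (X_eq _ _ hX) => ->.
  by apply: ltnW; apply: cntl_lt => //; apply: Mt_In.
have hm' : forall k, cntl U (Mt (T2 + k) i) <= cntl U (Mt (T2 + k.+1) i)
  by move=> k; rewrite addnS.
have [S0 hS0] := ev_mono hm' (fun k => count_size _ _).
exists (T2 + S0) => s hs.
have hT2 : T2 <= s := leq_trans (leq_addr S0 T2) hs.
case: (phC hT2 i) => [[hX _] | hlt]; first by case: (X_eq _ _ hX).
have hk : S0 <= s - T2 by rewrite -(leq_add2l T2) subnKC.
have e1 := hS0 _ hk; have e2 := hS0 _ (leqW hk).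
rewrite (subnKC hT2) in e1.
rewrite addnS (subnKC hT2) in e2.
by have := cntl_lt (Mt_In s i) hlt; rewrite e1 e2 ltnn.
Qed.

Lemma ev_all : exists S, T'.+1 + n + n <= S /\ forall s, S <= s -> forall i, Mt s.+1 i = Mt s i.
Proof.
suff H : forall l : seq 'I_n, exists S, T'.+1 + n + n <= S /\ forall s, S <= s -> forall i, i \in l -> Mt s.+1 i = Mt s i.
  have [S [h1 h2]] := H (enum 'I_n); exists S; split => // s hs i.
  by apply: h2 => //; rewrite mem_enum.
elim=> [|a l [S [h1 h2]]]; first by exists (T'.+1 + n + n).
have [Sa ha] := ev_const a.
exists (maxn S Sa); split; first by apply: leq_trans h1 (leq_maxl _ _).
move=> s hs i; rewrite inE => /orP [/eqP -> | hi].
  by apply: ha; apply: leq_trans hs; apply: leq_maxr.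
by apply: h2 => //; apply: leq_trans hs; apply: leq_maxl.
Qed.

Lemma conn_eq t : (forall i k, e i k -> Rle (Mt t k) (Mt t i)) -> forall i j, Mt t i = Mt t j.
Proof.
move=> hle i j.
have hc : connect e i j by case: Hnet => _ [h _ _].
case/connectP: hc => p hp ->; elim: p i hp => [|y p IH] x /=; first by [].
case/andP => hxy hp; rewrite -(IH y hp).
apply: Rle_antisym; [apply: hle; exact: e_sym | exact: hle].
Qed.

Lemma reach t x : exists K, (forall k, K <= k -> iter k (Pt t) x = iter K (Pt t) x) /\ Pt t (iter K (Pt t) x) = iter K (Pt t) x.
Proof.
suff H : forall N x, #|Anc t x| <= N -> exists K,
    (forall k, K <= k -> iter k (Pt t) x = iter K (Pt t) x) /\ Pt t (iter K (Pt t) x) = iter K (Pt t) x by exact: H _ x (leqnn _).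
elim=> [|N IH] {}x hN.
  move: hN; rewrite leqn0 => /eqP/card0_eq/(_ x).
  by rewrite !inE connect0.
case: (eqVneq (Pt t x) x) => [hx | hx].
  exists 0; split; last exact: hx.
  by elim=> [|k IHk] // _; rewrite iterS IHk.
have [K [h1 h2]] := IH (Pt t x) (leq_trans (anc_lt _ _ hx) hN : #|Anc t (Pt t x)| < N.+1).
exists K.+1; split; last by rewrite iterSr.
case=> [//|k] hk; rewrite !iterSr; exact: h1.
Qed.

Lemma converge : exists T'', forall t, T'' <= t -> forall i,
  is_max (fun j => u j t) (Mt t i) /\
  exists (j : 'I_n) (K0 : nat), (forall k, K0 <= k -> iter k (Pt t) i = j) /\ Mt t i = u j t.
Proof.
have [S [hS1 hS2]] := ev_all.
exists S => t ht.
have hT2 : T'.+1 + n + n <= t := leq_trans hS1 ht.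
have hs1 : T'.+1 <= t by apply: leq_trans hT2; rewrite -addnA leq_addr.
have keep : forall i, (forall k, e i k -> Rle (Mt t k) (Rmax (Mt t i) (u i t))) /\
    ~ Rlt (Mt t i) (u i t).
  move=> i; case: (phC hT2 i) => [[_ h] | hlt]; first exact: h.
  by rewrite (hS2 t ht i) in hlt; case: (Rlt_irrefl _ hlt).
have hle : forall i k, e i k -> Rle (Mt t k) (Mt t i).
  move=> i k hk; have [h1 h2] := keep i.
  have e1 : Rmax (Mt t i) (u i t) = Mt t i := Rmax_left _ _ (Rnot_lt_le _ _ h2).
  by rewrite -e1; apply: h1.
have heq := conn_eq hle.
move=> i.
have [K [hK1 hK2]] := reach t i.
set r := iter K (Pt t) i in hK1 hK2.
have hr : Mt t r = u r t.
  apply: Rle_antisym; first exact: root_le2 hs1 (no_bad hT2 r) hK2.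
  exact: Rnot_lt_le _ _ (keep r).2.
split.
  split; first by exists r; rewrite (heq i r).
  move=> j; rewrite (heq i j); exact: Rnot_lt_le _ _ (keep j).2.
by exists r, K; split => //; rewrite (heq i r).
Qed.

End Live.

End Net.


Theorem theorem5 :
  exists C : nat,
  forall U : seq R, U <> [::] -> List.NoDup U ->
  exists (Msg : finType) (m0 : Msg) (A : forall d : nat, automaton Msg d),
    (forall d : nat, #|st (A d)| <= size U ^ C * 2 ^ (C * d)) /\
    (forall (d : nat) (s : st (A d)), List.In (outM s) U) /\
    (forall (n : nat) (e : rel 'I_n) (nb : forall i : 'I_n, 'I_(deg e i) -> 'I_n),
       is_network nb ->
       forall u : 'I_n -> nat -> R,
       (forall i t, List.In (u i t) U) ->
       (exists T' : nat, forall i t, T' <= t -> u i t = u i T') ->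
       exists T'' : nat, forall t : nat, T'' <= t -> forall i : 'I_n,
         is_max (fun j => u j t) (Mvar nb m0 A u t i) /\
         exists (j : 'I_n) (K0 : nat),
           (forall k : nat, K0 <= k -> iter k (Pvar nb m0 A u t) i = j) /\
           Mvar nb m0 A u t i = u j t).
Proof.
exists 2 => U hU _.
have hsz : 0 < size U by case: U hU.
pose i0 : 'I_(size U) := Ordinal hsz.
exists (Msg U), (i0, false, false), (aut i0).
split; first exact: card_bound.
split; first by move=> d s; exact: In_nth (ltn_ord _).
move=> n e nb hnet u hu [T' hT'].
exact: (converge i0 hnet (i0, false, false) hu hT').
Qed.
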